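(* Assume $\psi$ has conductor $\mathfrak o$ and the Haar measure on $F$ gives $\mathfrak o$ volume $1$. Let $(\pi,V)$ be a smooth representation of $\mathrm{GSp}(4,F)$ and $p:V\to V_{Z^J,\psi}$ the projection. For every $w\in V_{Z^J,\psi}$ there exists a unique $v\in V$ such that: (i) $p(v)=w$; (ii) $\pi(z(x))v=v$ for all $x\in\mathfrak o$; (iii) $\int_{\mathfrak p^{-1}}\pi(z(x))v\,dx=0$; (iv) $\pi(d(c))v=v$ for all $c\in\mathfrak o^\times$.
   Context: $F$ non-archimedean local field of characteristic zero with ring of integers $\mathfrak o$ and maximal ideal $\mathfrak p$; $\psi$ a non-trivial character of $F$; conductor $\mathfrak o$ means $\psi$ is trivial on $\mathfrak o$ but not on $\mathfrak p^{-1}$. $\mathrm{GSp}(4,F)$: similitudes of $J=\begin{bmatrix}&&&1\\&&1\\&-1\\-1\end{bmatrix}$. $d(c)=\mathrm{diag}(1,1,c,c)$, $z(x)=1_4+xE_{14}$ (identity matrix with $x$ in position $(1,4)$), $Z^J=\{z(x)\}$, $V_{Z^J,\psi}=V/\mathrm{span}\{\pi(z(x))v-\psi(x)v: x\in F,v\in V\}$. *)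

(* Defs.v *)
From HB Require Import structures.
From mathcomp Require Import all_boot all_order all_algebra.
From mathcomp Require Import reals.
From mathcomp Require Import complex.
Set Implicit Arguments. Unset Strict Implicit. Unset Printing Implicit Defensive.
Import Order.TTheory GRing.Theory Num.Theory.
Local Open Scope ring_scope.

(* A normalized discrete valuation val : F -> int (its value at 0 is
   irrelevant: 0 is treated as having valuation +oo everywhere below). *)

Definition in_pn (F : fieldType) (val : F -> int) (n : int) (x : F) : bool :=
  (x == 0) || (n <= val x).

Definition in_o (F : fieldType) (val : F -> int) (x : F) : bool := in_pn val 0 x.

Definition unit_o (F : fieldType) (val : F -> int) (x : F) : bool :=
  (x != 0) && (val x == 0).

Definition local_field_char0 (F : fieldType) (val : F -> int) : Prop :=
  [/\
      (forall x y : F, x != 0 -> y != 0 -> val (x * y) = val x + val y),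
      (forall x y : F, x != 0 -> y != 0 -> x + y != 0 ->
          Num.min (val x) (val y) <= val (x + y)),
      (* normalized (hence surjective onto int) discrete valuation *)
      (exists varpi : F, varpi != 0 /\ val varpi = 1)
    & (* finite residue field o/p *)
      [/\ (exists s : seq F, all (in_o val) s /\
          forall x, in_o val x -> (exists2 a, a \in s & in_pn val 1 (x - a))),
      (forall u : nat -> F,
          (forall n : int, exists N : nat, forall m k : nat,
              (N <= m)%N -> (N <= k)%N -> in_pn val n (u m - u k)) ->
          exists l : F, forall n : int, exists N : nat, forall m : nat,
              (N <= m)%N -> in_pn val n (u m - l))
    &
      (forall n : nat, (n.+1)%:R != 0 :> F)]].

Definition add_char (F : fieldType) (C : ringType) (psi : F -> C) : Prop :=
  forall x y : F, psi (x + y) = psi x * psi y.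

Definition nontrivial_char (F : fieldType) (C : ringType) (psi : F -> C) : Prop :=
  exists x : F, psi x != 1.

Definition conductor_o (F : fieldType) (val : F -> int) (C : ringType)
    (psi : F -> C) : Prop :=
  (forall x, in_o val x -> psi x = 1) /\
  (exists x, in_pn val (-1) x /\ psi x != 1).

Definition Jmx (F : fieldType) : 'M[F]_4 :=
  \matrix_(i < 4, j < 4)
     (if (i + j == 3)%N then (if (i < 2)%N then 1 else -1) else 0).

Definition in_GSp4 (F : fieldType) (g : 'M[F]_4) : Prop :=
  exists lam : F, lam != 0 /\ g^T *m Jmx F *m g = lam *: Jmx F.

Definition dmx (F : fieldType) (c : F) : 'M[F]_4 :=
  diag_mx (\row_(j < 4) (if (j < 2)%N then 1 else c)).

Definition zmx (F : fieldType) (x : F) : 'M[F]_4 :=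
  1%:M + x *: delta_mx (0 : 'I_4) (3 : 'I_4).

Definition in_Kn (F : fieldType) (val : F -> int) (n : nat) (g : 'M[F]_4) : Prop :=
  in_GSp4 g /\ forall i j, in_pn val n%:Z ((g - 1%:M) i j).

Definition smooth_rep (F : fieldType) (val : F -> int) (C : ringType)
    (V : lmodType C) (pi : 'M[F]_4 -> V -> V) : Prop :=
  [/\ (forall g, in_GSp4 g -> linear (pi g)),
      (forall v, pi 1%:M v = v),
      (forall g h v, in_GSp4 g -> in_GSp4 h -> pi (g *m h) v = pi g (pi h v))
    & (* smoothness: every vector has an open stabilizer *)
      (forall v, exists n : nat, (0 < n)%N /\
           forall g, in_Kn val n g -> pi g v = v)].

(* ---------- the kernel of p : V -> V_{Z^J,psi} ---------- *)
Definition in_ZJ_span (F : fieldType) (C : ringType) (V : lmodType C)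
    (pi : 'M[F]_4 -> V -> V) (psi : F -> C) (w : V) : Prop :=
  exists s : seq (C * F * V),
    w = \sum_(t <- s) t.1.1 *: (pi (zmx t.1.2) t.2 - psi t.1.2 *: t.2).

Definition reps_mod (F : fieldType) (val : F -> int) (m : int) (N : nat)
    (rs : seq F) : Prop :=
  [/\ all (in_pn val m) rs,
      (forall x, in_pn val m x -> (exists2 a, a \in rs & in_pn val N%:Z (x - a)))
    & (forall i j, (i < size rs)%N -> (j < size rs)%N ->
         in_pn val N%:Z (nth 0 rs i - nth 0 rs j) -> i = j)].

(* For f invariant under p^N-translations on p^{-1}, the
   integral is vol(p^N) * sum over cosets, and vol(p^N) = 1/[o : p^N]
   because vol(o) = 1. *)
Definition is_integral_pinv (F : fieldType) (val : F -> int) (C : fieldType)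
    (V : lmodType C) (f : F -> V) (I : V) : Prop :=
  exists N : nat,
    (forall x y, in_pn val (-1) x -> in_pn val N%:Z y -> f (x + y) = f x) /\
    exists ro rp : seq F,
      [/\ reps_mod val 0 N ro, reps_mod val (-1) N rp
        & I = (size ro)%:R^-1 *: \sum_(a <- rp) f a].

(* Main.v *)
Require Import Defs.
From HB Require Import structures.
From mathcomp Require Import all_boot all_order all_algebra.
From mathcomp Require Import reals.
From mathcomp Require Import complex.
From mathcomp Require Import zify ring.
Set Implicit Arguments. Unset Strict Implicit. Unset Printing Implicit Defensive.
Import Order.TTheory GRing.Theory Num.Theory.
Local Open Scope ring_scope.

Section Val.
Variables (F : fieldType) (val : F -> int).
Hypothesis hmul : forall x y : F, x != 0 -> y != 0 -> val (x * y) = val x + val y.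
Hypothesis hultra : forall x y : F, x != 0 -> y != 0 -> x + y != 0 ->
          Num.min (val x) (val y) <= val (x + y).

Local Notation pn := (in_pn val).

Lemma val1 : val 1 = 0.
Proof. have := hmul (oner_neq0 F) (oner_neq0 F); rewrite mulr1 => h.
have := congr1 (fun z => z - val 1) h; rewrite /= addrK subrr => <-. done. Qed.

Lemma valN1 : val (-1) = 0.
Proof. have h1 : (-1 : F) != 0 by rewrite oppr_eq0 oner_neq0.
have := hmul h1 h1; rewrite mulrNN mulr1 val1 => h.
have : 2 * val (-1) = 0 by rewrite mulr2n mulrDl mul1r -h. 
by move/eqP; rewrite mulf_eq0 /= => /eqP. Qed.

Lemma valN x : val (- x) = val x.
Proof.
have [->|x0] := eqVneq x 0; first by rewrite oppr0.
have h1 : (-1 : F) != 0 by rewrite oppr_eq0 oner_neq0.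
by rewrite -mulN1r hmul // valN1 add0r. Qed.

Lemma valV x : x != 0 -> val x^-1 = - val x.
Proof. move=> x0; have := hmul x0 (invr_neq0 x0); rewrite divff // val1 => h.
by apply/eqP; rewrite -addr_eq0 addrC h. Qed.

Lemma pn0 n : pn n 0.
Proof. by rewrite /in_pn eqxx. Qed.

Lemma pnN n x : pn n (- x) = pn n x.
Proof. by rewrite /in_pn oppr_eq0 valN. Qed.

Lemma pnD n x y : pn n x -> pn n y -> pn n (x + y).
Proof.
rewrite /in_pn; have [->|x0] := eqVneq x 0; first by rewrite add0r.
have [->|y0] := eqVneq y 0; first by move=> h _; rewrite addr0 (negbTE x0).
have [->//|s0] := eqVneq (x + y) 0; rewrite /= => hx hy.
apply: le_trans (hultra x0 y0 s0). by rewrite le_min hx hy.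
Qed.

Lemma pnB n x y : pn n x -> pn n y -> pn n (x - y).
Proof. by move=> hx hy; apply: pnD => //; rewrite pnN. Qed.

Lemma pnW m n x : m <= n -> pn n x -> pn m x.
Proof. rewrite /in_pn => mn /orP [->//|h]. by rewrite (le_trans mn h) orbT. Qed.

Lemma pnM a b x y : pn a x -> pn b y -> pn (a + b) (x * y).
Proof.
rewrite /in_pn; have [->|x0] := eqVneq x 0; first by rewrite mul0r eqxx.
have [->|y0] := eqVneq y 0; first by rewrite mulr0 eqxx.
by rewrite /= hmul // => ha hb; rewrite lerD ?orbT.
Qed.

Lemma pn_val n x : x != 0 -> pn n x = (n <= val x).
Proof. by rewrite /in_pn => /negbTE ->. Qed.

Lemma pnC n x y : pn n (x - y) = pn n (y - x).
Proof. by rewrite -pnN opprB. Qed.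

Lemma pn_trans n x y z : pn n (x - y) -> pn n (y - z) -> pn n (x - z).
Proof. move=> h1 h2; have := pnD h1 h2. by rewrite addrA subrK. Qed.

Lemma val_strict x y : x != 0 -> pn (val x + 1) y -> x + y != 0 /\ val (x + y) = val x.
Proof.
move=> x0 hy.
have s0 : x + y != 0.
  apply/negP => /eqP h. have : y = - x by apply/eqP; rewrite -addr_eq0 addrC h.
  move=> yx; move: hy; rewrite yx pnN pn_val //; lia.
split=> //.
have [->|y0] := eqVneq y 0; first by rewrite addr0.
have hy' : val x + 1 <= val y by rewrite -pn_val.
apply/eqP; rewrite eq_le; apply/andP; split; last first.
  have := hultra x0 y0 s0; rewrite ge_min => /orP [//|h].
  by apply: le_trans h; apply: le_trans hy'; rewrite lerDl.
have ny0 : - y != 0 by rewrite oppr_eq0.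
have := hultra s0 ny0; rewrite addrK => /(_ x0); rewrite valN ge_min => /orP [//|h].
by move: (le_trans hy' h); rewrite gerDl.
Qed.

Lemma val_unit_mul n c x : val c = 0 -> c != 0 -> pn n (c * x) = pn n x.
Proof.
move=> vc c0; have [->|x0] := eqVneq x 0; first by rewrite mulr0.
by rewrite !pn_val ?mulf_neq0 // hmul // vc add0r.
Qed.


Definition rep (A : pred F) (n : int) (rs : seq F) : Prop :=
  [/\ all A rs,
      (forall x, A x -> (exists2 a, a \in rs & pn n (x - a)))
    & (forall i j, (i < size rs)%N -> (j < size rs)%N ->
         pn n (nth 0 rs i - nth 0 rs j) -> i = j)].

Lemma rep_eq A n rs a b : rep A n rs -> a \in rs -> b \in rs -> pn n (a - b) -> a = b.
Proof.
case=> _ _ h ha hb hab.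
have := h (index a rs) (index b rs); rewrite !index_mem !nth_index // => /(_ ha hb hab) e.
by rewrite -(nth_index 0 ha) e nth_index.
Qed.

Lemma rep_uniq A n rs : rep A n rs -> uniq rs.
Proof.
case=> _ _ h; apply/(uniqP 0) => i j; rewrite !inE => hi hj e.
by apply: h => //; rewrite e subrr pn0.
Qed.

Lemma rep_intro A n rs : all A rs ->
  (forall x, A x -> (exists2 a, a \in rs & pn n (x - a))) -> uniq rs ->
  (forall a b, a \in rs -> b \in rs -> pn n (a - b) -> a = b) -> rep A n rs.
Proof.
move=> hA hc hu he; split => // i j hi hj hij.
by apply/(uniqP 0 hu) => //; apply: he => //; apply: mem_nth.
Qed.

Lemma rep_mem A n rs x : rep A n rs -> x \in rs -> A x.
Proof. by case=> /allP h _ _ /h. Qed.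

Definition rrep (rs : seq F) n (x : F) := nth 0 rs (find (fun b => pn n (x - b)) rs).

Lemma rrepP A n rs x : rep A n rs -> A x -> rrep rs n x \in rs /\ pn n (x - rrep rs n x).
Proof.
case=> _ hc _ hx; have [a ain ha] := hc x hx.
have hh : has (fun b => pn n (x - b)) rs by apply/hasP; exists a.
split; first by rewrite /rrep mem_nth // -has_find.
by have := nth_find 0 hh.
Qed.

Lemma rep_size A n rs1 rs2 : rep A n rs1 -> rep A n rs2 -> (size rs1 <= size rs2)%N.
Proof.
move=> h1 h2.
have -> : size rs1 = size (map (rrep rs2 n) rs1) by rewrite size_map.
apply: uniq_leq_size.
  rewrite map_inj_in_uniq ?(rep_uniq h1) // => a b ha hb e.
  apply: (rep_eq h1 ha hb).
  have [_ p1] := rrepP h2 (rep_mem h1 ha); have [_ p2] := rrepP h2 (rep_mem h1 hb).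
  by apply: pn_trans p1 _; rewrite e pnC.
by move=> y /mapP [a ha ->]; have [] := rrepP h2 (rep_mem h1 ha).
Qed.

Lemma rep_big (V : zmodType) A n rs1 rs2 (f : F -> V) : rep A n rs1 -> rep A n rs2 ->
  (forall x y, A x -> A y -> pn n (x - y) -> f x = f y) ->
  \sum_(x <- rs1) f x = \sum_(x <- rs2) f x.
Proof.
move=> h1 h2 hf.
rewrite (@eq_big_seq _ _ _ _ _ _ (fun x => f (rrep rs2 n x))); last first.
  move=> x hx; have [hr p] := rrepP h2 (rep_mem h1 hx).
  by apply: hf => //; [exact: rep_mem h1 hx | exact: rep_mem h2 hr].
rewrite -(big_map (rrep rs2 n) xpredT f); apply: perm_big.
have hu : uniq (map (rrep rs2 n) rs1).
  rewrite map_inj_in_uniq ?(rep_uniq h1) // => a b ha hb e.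
  apply: (rep_eq h1 ha hb).
  have [_ p1] := rrepP h2 (rep_mem h1 ha); have [_ p2] := rrepP h2 (rep_mem h1 hb).
  by apply: pn_trans p1 _; rewrite e pnC.
have hs : {subset map (rrep rs2 n) rs1 <= rs2}.
  by move=> y /mapP [a ha ->]; have [] := rrepP h2 (rep_mem h1 ha).
have hsz : (size rs2 <= size (map (rrep rs2 n) rs1))%N.
  by rewrite size_map; exact: rep_size h2 h1.
have [_ eqs] := uniq_min_size hu hs hsz.
by apply: uniq_perm => //; apply: rep_uniq h2.
Qed.

Lemma rep_map (A B : pred F) n m rs (phi : F -> F) : rep A n rs ->
  (forall x, A x -> B (phi x)) ->
  (forall y, B y -> exists2 x, A x & phi x = y) ->
  (forall x y, A x -> A y -> pn n (x - y) -> pn m (phi x - phi y)) ->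
  (forall x y, A x -> A y -> pn m (phi x - phi y) -> pn n (x - y)) ->
  rep B m (map phi rs).
Proof.
move=> h hAB hsurj hc1 hc2; apply: rep_intro.
- by apply/allP => y /mapP [x hx ->]; apply/hAB/(rep_mem h).
- move=> y hy; have [x hx <-] := hsurj y hy.
  have [_ hc _] := h; have [a ha hxa] := hc x hx.
  by exists (phi a); [exact: map_f | apply: hc1 => //; apply: rep_mem h ha].
- rewrite map_inj_in_uniq ?(rep_uniq h) // => a b ha hb e.
  apply: (rep_eq h ha hb); apply: hc2; try exact: (rep_mem h).
  by rewrite e subrr pn0.
- move=> a b /mapP [x hx ->] /mapP [y hy ->] e; congr phi.
  apply: (rep_eq h hx hy); apply: hc2 => //; exact: (rep_mem h).
Qed.

Lemma rep_filter1 A n rs x0 : rep A n rs -> A x0 ->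
  exists a, [seq a <- rs | pn n (a - x0)] = [:: a].
Proof.
move=> h hx0.
have [a ha hxa] := (let: And3 _ hc _ := h in hc x0 hx0).
set s := filter _ _.
have ains : a \in s by rewrite mem_filter pnC ha hxa.
have hall : {subset s <= [:: a]}.
  move=> b; rewrite mem_filter inE => /andP [hb hbin]; apply/eqP.
  exact: (rep_eq h hbin ha (pn_trans hb hxa)).
have hu : uniq s by rewrite filter_uniq // (rep_uniq h).
have hs : (size s <= 1)%N by have := uniq_leq_size hu hall.
exists a; case: s ains hall hu hs => [//|b [|c t]] // ; rewrite inE => /eqP -> //.
Qed.

Lemma rep_filter (A B : pred F) n rs : rep A n rs ->
  (forall x, B x -> A x) ->
  (forall x y, B x -> A y -> pn n (x - y) -> B y) ->
  rep B n [seq a <- rs | B a].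
Proof.
move=> h hBA hcl; apply: rep_intro.
- by apply: filter_all.
- move=> x hx; have [_ hc _] := h; have [a ha hxa] := hc x (hBA x hx).
  exists a => //; rewrite mem_filter ha andbT; apply: (hcl x a hx _ hxa).
  exact: (rep_mem h ha).
- by rewrite filter_uniq // (rep_uniq h).
- move=> a b; rewrite !mem_filter => /andP [_ ha] /andP [_ hb]; exact: (rep_eq h).
Qed.


Lemma rep_sumset a b c R1 R2 : a <= b -> b <= c -> rep (pn a) b R1 -> rep (pn b) c R2 ->
  rep (pn a) c [seq x + y | x <- R1, y <- R2].
Proof.
move=> ab bc h1 h2.
have key : forall x1 y1 x2 y2, x1 \in R1 -> y1 \in R2 -> x2 \in R1 -> y2 \in R2 ->
    pn c ((x1 + y1) - (x2 + y2)) -> x1 = x2 /\ y1 = y2.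
  move=> x1 y1 x2 y2 hx1 hy1 hx2 hy2 hc.
  have ex : x1 = x2.
    apply: (rep_eq h1 hx1 hx2).
    have -> : x1 - x2 = (x1 + y1 - (x2 + y2)) - (y1 - y2).
      by ring.
    apply: pnB; first exact: pnW hc.
    by apply: pnB; apply: (rep_mem h2).
  split => //; apply: (rep_eq h2 hy1 hy2).
  by move: hc; rewrite ex opprD addrACA subrr add0r.
apply: rep_intro.
- apply/allP => z /allpairsP [[x y] [hx hy ->]].
  by apply: pnD; [apply: (rep_mem h1) | apply: (pnW ab); apply: (rep_mem h2)].
- move=> z hz; have [_ hc1 _] := h1; have [_ hc2 _] := h2.
  have [x hx hzx] := hc1 z hz; have [y hy hzy] := hc2 (z - x) hzx.
  exists (x + y); first by apply/allpairsP; exists (x, y).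
  by rewrite opprD addrA.
- apply: allpairs_uniq; [exact: rep_uniq h1 | exact: rep_uniq h2 |].
  move=> [x1 y1] [x2 y2] /allpairsP [[u1 v1] [hu1 hv1 e1]]
    /allpairsP [[u2 v2] [hu2 hv2 e2]].
  case: e1 => -> ->; case: e2 => -> -> /= e.
  have hc : pn c ((u1 + v1) - (u2 + v2)) by rewrite e subrr pn0.
  by have [-> ->] := key u1 v1 u2 v2 hu1 hv1 hu2 hv2 hc.
- move=> z1 z2 /allpairsP [[x1 y1] [hx1 hy1 ->]] /allpairsP [[x2 y2] [hx2 hy2 ->]] hc.
  by have [-> ->] := key x1 y1 x2 y2 hx1 hy1 hx2 hy2 hc.
Qed.

Lemma rrep_cov s n x : (exists2 a, a \in s & pn n (x - a)) ->
  rrep s n x \in s /\ pn n (x - rrep s n x).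
Proof.
move=> [a ha hxa].
have hh : has (fun b => pn n (x - b)) s by apply/hasP; exists a.
split; first by rewrite /rrep mem_nth // -has_find.
by have := nth_find 0 hh.
Qed.

Lemma rrep_congr s n x y : pn n (x - y) -> rrep s n x = rrep s n y.
Proof.
move=> hxy; rewrite /rrep; congr nth; apply: eq_find => b.
apply/idP/idP => h.
  by apply: pn_trans h; rewrite pnC.
exact: pn_trans hxy h.
Qed.

Lemma rep_exists (A : pred F) n s : all A s ->
  (forall x, A x -> (exists2 a, a \in s & pn n (x - a))) ->
  exists rs, rep A n rs.
Proof.
move=> hA hc; exists (undup (map (rrep s n) s)).
have self : forall x, x \in s -> rrep s n x \in s /\ pn n (x - rrep s n x).
  by move=> x hx; apply: rrep_cov; exists x => //; rewrite subrr pn0.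
apply: rep_intro.
- apply/allP => z; rewrite mem_undup => /mapP [x hx ->].
  by apply: (allP hA); have [] := self x hx.
- move=> x hx; have [a ha hxa] := hc x hx; exists (rrep s n a).
    by rewrite mem_undup; apply: map_f.
  by apply: pn_trans hxa _; have [] := self a ha.
- exact: undup_uniq.
- move=> z1 z2; rewrite !mem_undup => /mapP [x1 hx1 ->] /mapP [x2 hx2 ->] h.
  apply: rrep_congr; have [_ p1] := self x1 hx1; have [_ p2] := self x2 hx2.
  apply: pn_trans p1 _; apply: pn_trans h _; by rewrite pnC.
Qed.

Lemma rep_shift a b rs x0 : a <= b -> rep (pn a) b rs -> pn a x0 ->
  rep (pn a) b (map (fun x => x + x0) rs).
Proof.
move=> ab h hx0; apply: (rep_map h).
- by move=> x hx; apply: pnD.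
- by move=> y hy; exists (y - x0); [apply: pnB | rewrite subrK].
- by move=> x y _ _; rewrite opprD addrACA subrr addr0.
- by move=> x y _ _; rewrite opprD addrACA subrr addr0.
Qed.

Lemma rep_scale a b rs t : t != 0 -> rep (pn a) b rs ->
  rep (pn (val t + a)) (val t + b) (map (fun x => t * x) rs).
Proof.
move=> t0 h.
have ht : pn (val t) t by rewrite pn_val.
have hti : pn (- val t) t^-1 by rewrite pn_val ?invr_eq0 // valV.
apply: (rep_map h).
- by move=> x hx; apply: pnM.
- move=> y hy; exists (t^-1 * y); last by rewrite mulrA divff // mul1r.
  by have := pnM hti hy; rewrite addrA addNr add0r.
- by move=> x y _ _ hxy; rewrite -mulrBr; apply: pnM.
- move=> x y _ _ hxy; have := pnM hti hxy.
  by rewrite -mulrBr mulrA mulVf // mul1r addrA addNr add0r.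
Qed.


Lemma rep_base a : rep (pn a) a [:: 0].
Proof.
apply: rep_intro => //=; first by rewrite pn0.
  by move=> x hx; exists 0; rewrite ?inE // subr0.
by move=> u v; rewrite !inE => /eqP -> /eqP ->.
Qed.

Variable varpi : F.
Hypothesis hvarpi : varpi != 0 /\ val varpi = 1.
Variable s : seq F.
Hypothesis hs : all (in_o val) s /\
          forall x, in_o val x -> (exists2 a, a \in s & in_pn val 1 (x - a)).

Lemma exists_val (k : int) : exists t, t != 0 /\ val t = k.
Proof.
have [v0 v1] := hvarpi.
have hp : forall n : nat, varpi ^+ n != 0 /\ val (varpi ^+ n) = n%:Z.
  elim=> [|n [h1 h2]]; first by rewrite expr0 oner_neq0 val1.
  by rewrite exprS mulf_neq0 // hmul // h2 v1; split=> //; lia.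
case: k => n; first by exists (varpi ^+ n); apply: hp.
have [h1 h2] := hp n.+1; exists (varpi ^+ n.+1)^-1; rewrite invr_eq0 valV // h2.
by split=> //; rewrite NegzE.
Qed.

Lemma reps_ex a (k : nat) : exists rs, rep (pn a) (a + k%:Z) rs.
Proof.
have [s0 hs0] : exists s0, rep (pn 0) 1 s0 by case: hs => h1 h2; exact: rep_exists h1 h2.
elim: k => [|k [rs hrs]]; first by exists [:: 0]; rewrite addr0; apply: rep_base.
have [t [t0 vt]] := exists_val (a + k%:Z).
have := rep_scale t0 hs0; rewrite vt addr0 => hsc.
exists [seq x + y | x <- rs, y <- map (fun x => t * x) s0].
have -> : a + k.+1%:Z = a + k%:Z + 1 by rewrite -addrA; congr (_ + _); lia.
apply: rep_sumset hrs hsc; last by rewrite lerDl.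
by rewrite lerDl.
Qed.


Variable C : numFieldType.
Variable psi : F -> C.
Hypothesis hadd : forall x y, psi (x + y) = psi x * psi y.
Hypothesis htriv : forall x, pn 0 x -> psi x = 1.
Variable x0 : F.
Hypothesis hx0 : pn (-1) x0 /\ psi x0 != 1.

Lemma psi0 : psi 0 = 1.
Proof. by apply: htriv; apply: pn0. Qed.

Lemma psiN x : psi (- x) * psi x = 1.
Proof. by rewrite -hadd addNr psi0. Qed.

Lemma psi_neq0 x : psi x != 0.
Proof. by apply/negP => /eqP h; have := psiN x; rewrite h mulr0 => /eqP; rewrite eq_sym oner_eq0. Qed.

Lemma x0_neq0 : x0 != 0.
Proof. by apply/negP => /eqP h; case: hx0 => _; rewrite h psi0 eqxx. Qed.

Lemma char_sum (a n : int) rs (chi : F -> C) : a <= n -> rep (pn a) n rs ->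
  (forall x y, chi (x + y) = chi x * chi y) -> (forall x, pn n x -> chi x = 1) ->
  forall z, pn a z -> chi z != 1 -> \sum_(x <- rs) chi x = 0.
Proof.
move=> an h hm h1 z hz cz.
have per : forall x y, pn a x -> pn a y -> pn n (x - y) -> chi x = chi y.
  by move=> x y _ _ hxy; rewrite -(subrK y x) hm h1 // mul1r.
have e : \sum_(x <- rs) chi x = chi z * \sum_(x <- rs) chi x.
  rewrite -{1}(rep_big (rep_shift an h hz) h per) big_map mulr_sumr.
  by apply: eq_bigr => x _; rewrite hm mulrC.
have : (1 - chi z) * \sum_(x <- rs) chi x = 0 by rewrite mulrBl mul1r -e subrr.
by move/eqP; rewrite mulf_eq0 subr_eq0 eq_sym (negbTE cz) /= => /eqP.
Qed.


Variable V : lmodType C.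

Definition LIN (f : V -> V) := forall a u v, f (a *: u + v) = a *: f u + f v.

Lemma lin0 f : LIN f -> f 0 = 0.
Proof. move=> h; have := h 1 0 0; rewrite !scale1r !addr0.
by move/(congr1 (fun z => z - f 0)); rewrite subrr addrK => /esym. Qed.

Lemma linD f : LIN f -> forall u v, f (u + v) = f u + f v.
Proof. by move=> h u v; have := h 1 u v; rewrite !scale1r. Qed.

Lemma linZ f : LIN f -> forall a u, f (a *: u) = a *: f u.
Proof. by move=> h a u; rewrite -[a *: u]addr0 h (lin0 h) addr0. Qed.

Lemma linN f : LIN f -> forall u, f (- u) = - f u.
Proof. by move=> h u; rewrite -scaleN1r linZ // scaleN1r. Qed.

Lemma linB f : LIN f -> forall u v, f (u - v) = f u - f v.
Proof. by move=> h u v; rewrite linD // linN. Qed.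

Lemma lin_sum f (I : Type) (r : seq I) (P : pred I) (g : I -> V) : LIN f ->
  f (\sum_(i <- r | P i) g i) = \sum_(i <- r | P i) f (g i).
Proof.
move=> h; elim: r => [|i r IH]; first by rewrite !big_nil lin0.
by rewrite !big_cons; case: (P i); rewrite ?linD ?IH.
Qed.

Variables Z D : F -> V -> V.
Hypothesis Zlin : forall x, LIN (Z x).
Hypothesis Dlin : forall c, c != 0 -> LIN (D c).
Hypothesis ZZ : forall x y v, Z x (Z y v) = Z (x + y) v.
Hypothesis Z0 : forall v, Z 0 v = v.
Hypothesis ZD : forall c y v, c != 0 -> Z y (D c v) = D c (Z (c * y) v).
Hypothesis DD : forall c c' v, c != 0 -> c' != 0 -> D c (D c' v) = D (c * c') v.
Hypothesis Zsm : forall v, exists n : nat,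
  (forall x, pn n%:Z x -> Z x v = v) /\ (forall c, c != 0 -> pn n%:Z (c - 1) -> D c v = v).

Definition Sp (w : V) : Prop := exists s : seq (C * F * V),
    w = \sum_(t <- s) t.1.1 *: (Z t.1.2 t.2 - psi t.1.2 *: t.2).

Lemma Sp0 : Sp 0.
Proof. by exists [::]; rewrite big_nil. Qed.

Lemma SpD u v : Sp u -> Sp v -> Sp (u + v).
Proof. by move=> [s1 ->] [t1 ->]; exists (s1 ++ t1); rewrite big_cat. Qed.

Lemma SpZ a u : Sp u -> Sp (a *: u).
Proof.
move=> [s1 ->]; exists [seq (a * t.1.1, t.1.2, t.2) | t <- s1].
by rewrite big_map scaler_sumr; apply: eq_bigr => t _; rewrite scalerA.
Qed.

Lemma SpB u v : Sp u -> Sp v -> Sp (u - v).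
Proof. by move=> hu hv; apply: SpD hu _; rewrite -scaleN1r; apply: SpZ. Qed.

Lemma Sp_gen x v : Sp (Z x v - psi x *: v).
Proof. by exists [:: (1, x, v)]; rewrite big_cons big_nil addr0 scale1r. Qed.

Lemma Sp_sum (I : Type) (r : seq I) (P : pred I) (g : I -> V) :
  (forall i, P i -> Sp (g i)) -> Sp (\sum_(i <- r | P i) g i).
Proof. by move=> h; apply: big_ind => //; [exact: Sp0 | exact: SpD]. Qed.

Lemma Sp_eig x e chi : Z x e = chi *: e -> chi != psi x -> Sp e.
Proof.
move=> he hc.
have -> : e = (chi - psi x)^-1 *: (Z x e - psi x *: e).
  by rewrite he -scalerBl scalerA mulVf ?scale1r // subr_eq0.
by apply: SpZ; apply: Sp_gen.
Qed.


Lemma int_h1 (n : nat) : (0 < n)%N -> - (n%:Z) <= -1.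
Proof. move=> h; lia. Qed.
Lemma int_h2 (n : nat) : (0 < n)%N -> 1 <= n%:Z.
Proof. move=> h; lia. Qed.
Lemma int_h3 (n : nat) (a b : int) : -1 <= a -> b < n%:Z -> - n%:Z <= a + - b.
Proof. move=> h1 h2; lia. Qed.
Lemma int_h4 (n : nat) : - n%:Z <= 0.
Proof. lia. Qed.
Lemma int_h4' (n : nat) : 0 <= n%:Z.
Proof. lia. Qed.

Lemma pn_nat0 (n : nat) x : pn n%:Z x -> pn 0 x.
Proof. by apply: pnW. Qed.

Lemma Zsum x (I : Type) (r : seq I) (P : pred I) (g : I -> V) :
  Z x (\sum_(i <- r | P i) g i) = \sum_(i <- r | P i) Z x (g i).
Proof. exact: lin_sum. Qed.

Lemma ZZ' x y v : Z x (Z y v) = Z (y + x) v.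
Proof. by rewrite ZZ addrC. Qed.

Lemma unit_val1 n c : (0 < n)%N -> c != 0 -> pn n%:Z (c - 1) -> val c = 0.
Proof.
move=> hn c0 h.
have h1 : pn (val 1 + 1) (c - 1) by rewrite val1 add0r; apply: pnW h; lia.
by have [_] := val_strict (oner_neq0 F) h1; rewrite addrC subrK val1.
Qed.

Definition Eu (u : V) (R : seq F) := \sum_(y <- R) psi (- y) *: Z y u.

Lemma sum_const_seq (I : Type) (r : seq I) (w : V) :
  \sum_(i <- r) w = (size r)%:R *: w.
Proof.
elim: r => [|i r IH]; first by rewrite big_nil scale0r.
by rewrite big_cons IH /= -{1}[w]scale1r -scalerDl -natr1 addrC.
Qed.

Section E.
Variables (n : nat) (u : V) (R : seq F).
Hypothesis hn : (0 < n)%N.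
Hypothesis hZu : forall x, pn n%:Z x -> Z x u = u.
Hypothesis hDu : forall c, c != 0 -> pn n%:Z (c - 1) -> D c u = u.
Hypothesis hR : rep (pn (- n%:Z)) n%:Z R.

Lemma Eu_per : forall z z', pn (- n%:Z) z -> pn (- n%:Z) z' -> pn n%:Z (z - z') ->
   psi (- z) *: Z z u = psi (- z') *: Z z' u.
Proof.
move=> z z' _ _ hzz.
have -> : - z = - z' + (z' - z) by ring.
rewrite hadd (htriv (x := z' - z)); last by rewrite pnC; apply: pnW hzz; lia.
by rewrite mulr1 -(subrK z' z) -ZZ' hZu.
Qed.

Lemma E2 x : pn (- n%:Z) x -> Z x (Eu u R) = psi x *: Eu u R.
Proof.
move=> hx.
have hsh := rep_shift (a := - n%:Z) (b := n%:Z) (x0 := x) ltac:(lia) hR hx.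
have := rep_big hsh hR Eu_per; rewrite big_map => e.
rewrite /Eu -{2}e Zsum scaler_sumr; apply: eq_bigr => y _.
rewrite (linZ (Zlin x)) ZZ' scalerA -hadd; congr (psi _ *: _); ring.
Qed.

Lemma E1 : Sp (Eu u R - (size R)%:R *: u).
Proof.
rewrite /Eu -sum_const_seq -sumrB; apply: Sp_sum => y _.
have -> : psi (- y) *: Z y u - u = psi (- y) *: (Z y u - psi y *: u).
  by rewrite scalerBr scalerA psiN scale1r.
by apply: SpZ; apply: Sp_gen.
Qed.

Lemma E3 c : c != 0 -> pn n%:Z (c - 1) -> D c (Eu u R) = Eu u R.
Proof.
move=> c0 hc.
have vc := unit_val1 hn c0 hc.
have ci0 : c^-1 != 0 by rewrite invr_eq0.
have hsc := rep_scale ci0 hR; rewrite valV // vc oppr0 !add0r in hsc.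
have pc : pn 0 c by rewrite pn_val // vc.
have per : forall z z', pn (- n%:Z) z -> pn (- n%:Z) z' -> pn n%:Z (z - z') ->
   psi (- (c * z)) *: Z z u = psi (- (c * z')) *: Z z' u.
  move=> z z' _ _ hzz.
  have -> : - (c * z) = - (c * z') + c * (z' - z) by ring.
  rewrite hadd (htriv (x := c * (z' - z))); last first.
    by rewrite -pnN -mulrN opprB; have := pnM pc (pn_nat0 hzz); rewrite addr0.
  by rewrite mulr1 -(subrK z' z) -ZZ' hZu.
have := rep_big hsc hR per; rewrite big_map => e.
rewrite /Eu (lin_sum _ _ _ (Dlin c0)).
have e2 : forall y, psi (- y) *: D c (Z y u) = psi (- (c * (c^-1 * y))) *: Z (c^-1 * y) u.
  move=> y; rewrite mulrA divff // mul1r.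
  by rewrite -[in D c (Z y u)](mulVKf c0 y) -ZD // (hDu c0 hc).
under eq_bigr => y _ do rewrite (linZ (Dlin c0)) e2.
rewrite e; apply: eq_big_seq => z hz; congr (_ *: _).
have -> : - (c * z) = - z + (- ((c - 1) * z)) by ring.
rewrite hadd (htriv (x := - ((c - 1) * z))) ?mulr1 // pnN.
by have := pnM hc (rep_mem hR hz); rewrite addrN.
Qed.

Lemma unitP c : unit_o val c -> c != 0 /\ val c = 0.
Proof. by case/andP => h /eqP. Qed.

Lemma size_pos A m (rs : seq F) : rep A m rs -> A 0 -> (0 < size rs)%N.
Proof.
case=> _ hc _ h0; have [a ha _] := hc 0 h0.
by rewrite lt0n size_eq0; apply/negP => /eqP e; rewrite e in ha.
Qed.

Lemma natr_size_neq0 A m (rs : seq F) : rep A m rs -> A 0 -> (size rs)%:R != 0 :> C.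
Proof. by move=> h h0; rewrite pnatr_eq0 -lt0n (size_pos h h0). Qed.

Lemma eigDE c x : unit_o val c -> pn (- n%:Z) (c * x) ->
  Z x (D c (Eu u R)) = psi (c * x) *: D c (Eu u R).
Proof.
move=> /unitP [c0 _] hx.
by rewrite ZD // E2 // (linZ (Dlin c0)).
Qed.

Lemma exist_main : exists v, [/\ Sp (v - u), (forall x, pn 0 x -> Z x v = v),
   (forall P, rep (pn (-1)) 0 P -> \sum_(a <- P) Z a v = 0)
 & (forall c, unit_o val c -> D c v = v)].
Proof.
set E := Eu u R.
set k : C := (size R)%:R.
have k0 : k != 0 by apply: (natr_size_neq0 hR); apply: pn0.
have [R0 hR0] := reps_ex 0 n; rewrite add0r in hR0.
have hn1 : pn 1 =1 pn 1 by [].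
have closU : forall x y, unit_o val x -> pn 0 y -> pn n%:Z (x - y) -> unit_o val y.
  move=> x y /unitP [x0' vx] _ hxy.
  have h1 : pn (val x + 1) (y - x) by rewrite vx add0r pnC; apply: pnW hxy; apply: int_h2.
  have [h1' h2'] := val_strict x0' h1; rewrite [x + _]addrC subrK in h1' h2'.
  by rewrite /unit_o h1' h2' vx eqxx.
have hU : rep (unit_o val) n%:Z [seq c <- R0 | unit_o val c].
  apply: rep_filter hR0 _ closU.
  by move=> x /unitP [x0' vx]; rewrite pn_val // vx.
set U := [seq c <- R0 | unit_o val c].
set v := k^-1 *: \sum_(c <- U) D c E.
have unitU : forall c, c \in U -> unit_o val c by move=> c; apply: rep_mem hU.
have pc : forall c, unit_o val c -> pn 0 c.
  by move=> c /unitP [c0 vc]; rewrite pn_val // vc.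
have pnn : forall y, pn 0 y -> pn (- n%:Z) y by move=> y; apply: pnW; apply: int_h4.
exists v; split.
- rewrite /v (bigID (fun c => pn n%:Z (c - 1))) /=.
  have [c1 e1] := rep_filter1 hU (x0 := 1) ltac:(by rewrite /unit_o oner_neq0 val1 eqxx).
  rewrite -big_filter e1 big_cons big_nil addr0.
  have : c1 \in [seq a <- U | pn n%:Z (a - 1)] by rewrite e1 inE.
  rewrite mem_filter => /andP [hc1 c1U].
  have [c10 _] := unitP (unitU c1 c1U).
  rewrite E3 //.
  set rest := \sum_(c <- U | ~~ pn n%:Z (c - 1)) D c E.
  have -> : k^-1 *: (E + rest) - u = k^-1 *: (E - k *: u) + k^-1 *: rest.
    by rewrite scalerDr scalerBr scalerA mulVf // scale1r addrAC.
  apply: SpD; apply: SpZ; first exact: E1.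
  rewrite /rest big_seq_cond; apply: Sp_sum => c /andP [cU hnc].
  have [c0 vc] := unitP (unitU c cU).
  set d := c - 1.
  have d0 : d != 0 by apply/negP => /eqP e; move: hnc; rewrite -/d e pn0.
  have vd : val d < n%:Z by move: hnc; rewrite pn_val // -ltNge.
  have [x0p x0n] := hx0.
  have vx0 : -1 <= val x0 by rewrite -pn_val // x0_neq0.
  set x := x0 / d.
  have x0' : x != 0 by rewrite mulf_neq0 ?invr_eq0 // x0_neq0.
  have hx : pn (- n%:Z) x.
    rewrite pn_val // hmul ?x0_neq0 ?invr_eq0 // valV //.
    exact: int_h3.
  have ecx : c * x = x + x0 by rewrite /x /d; field.
  apply: (Sp_eig (x := x) (chi := psi (c * x))).
    apply: eigDE; first exact: unitU.
    by rewrite ecx; apply: pnD => //; apply: pnW x0p; apply: int_h1.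
  rewrite ecx hadd; apply/negP => /eqP e.
  have : psi x * (psi x0 - 1) = 0 by rewrite mulrBr mulr1 e subrr.
  by move/eqP; rewrite mulf_eq0 (negbTE (psi_neq0 x)) subr_eq0 (negbTE x0n).
- move=> x hx; rewrite /v (linZ (Zlin x)) Zsum; congr (_ *: _).
  apply: eq_big_seq => c hc; rewrite eigDE ?unitU //; last first.
    by apply: pnn; have := pnM (pc c (unitU c hc)) hx; rewrite addr0.
  by rewrite htriv ?scale1r //; have := pnM (pc c (unitU c hc)) hx; rewrite addr0.
- move=> P hP.
  under eq_bigr => a _ do rewrite /v (linZ (Zlin a)) Zsum.
  rewrite -scaler_sumr exchange_big /= big1_seq ?scaler0 // => c /andP [_ hc].
  rewrite (eq_big_seq (fun a => psi (c * a) *: D c E)); last first.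
    move=> a ha; apply: eigDE; first exact: unitU.
    apply: pnW (_ : pn (0 + -1) (c * a)); first by rewrite add0r; apply: int_h1.
    by apply: pnM; [apply: pc; apply: unitU | apply: rep_mem hP ha].
  rewrite -scaler_suml.
  have [c0 vc] := unitP (unitU c hc).
  have [x0p x0n] := hx0.
  rewrite (@char_sum (-1) 0 P (fun a => psi (c * a)) _ hP _ _ (c^-1 * x0)) ?scale0r //.
  + by move=> a b; rewrite mulrDr hadd.
  + by move=> a ha; apply: htriv; have := pnM (pc c (unitU c hc)) ha; rewrite addr0.
  + by have := pnM (_ : pn 0 c^-1) x0p; rewrite add0r; apply; rewrite pn_val ?invr_eq0 // valV // vc oppr0.
  + by rewrite mulVKf.
- move=> c' hc'; have [c'0 vc'] := unitP hc'.
  rewrite /v (linZ (Dlin c'0)) (lin_sum _ _ _ (Dlin c'0)); congr (_ *: _).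
  rewrite (eq_big_seq (fun c => D (c' * c) E)); last first.
    by move=> c hc; rewrite DD //; have [] := unitP (unitU c hc).
  rewrite -(big_map (fun c => c' * c) xpredT (fun z => D z E)).
  apply: (rep_big (A := unit_o val) (n := n%:Z)); last first.
  + move=> z z' hz hz' hzz; have [z0 vz] := unitP hz; have [z'0 vz'] := unitP hz'.
    rewrite -[z in LHS](mulVKf z'0 z) -DD ?mulf_neq0 ?invr_eq0 // E3 ?mulf_neq0 ?invr_eq0 //.
    have -> : z'^-1 * z - 1 = z'^-1 * (z - z') by rewrite mulrBr mulVf.
    by rewrite val_unit_mul ?invr_eq0 // valV // vz' oppr0.
  + exact: hU.
  apply: (rep_map hU).
  + move=> x /unitP [x0' vx]; by rewrite /unit_o mulf_neq0 // hmul // vx vc' addr0 eqxx.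
  + move=> y /unitP [y0 vy]; exists (c'^-1 * y); last by rewrite mulVKf.
    by rewrite /unit_o mulf_neq0 ?invr_eq0 // hmul ?invr_eq0 // valV // vy vc'.
  + by move=> x y _ _ h; rewrite -mulrBr val_unit_mul.
  + by move=> x y _ _; rewrite -mulrBr val_unit_mul.
Qed.

End E.


Lemma scale_cancel (a : C) (x : V) : a != 0 -> a *: x = 0 -> x = 0.
Proof. by move=> a0 h; rewrite -[x]scale1r -(mulVf a0) -scalerA h scaler0. Qed.

Lemma sum_ones (I : Type) (r : seq I) : \sum_(i <- r) (1 : C) = (size r)%:R.
Proof. by elim: r => [|i r IH]; rewrite ?big_nil // big_cons IH /= -natr1 addrC. Qed.

Lemma int_to_S v : (forall x, pn 0 x -> Z x v = v) ->
  (exists N : nat, exists ro rp, [/\ rep (pn 0) N%:Z ro, rep (pn (-1)) N%:Z rp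
       & \sum_(a <- rp) Z a v = 0]) ->
  forall P, rep (pn (-1)) 0 P -> \sum_(a <- P) Z a v = 0.
Proof.
move=> hv [N [ro [rp [hro hrp hsum]]]] P hP.
have hQ := rep_sumset (a := -1) (b := 0) (c := N%:Z) ltac:(by []) (int_h4' N) hP hro.
have per : forall z z', pn (-1) z -> pn (-1) z' -> pn N%:Z (z - z') -> Z z v = Z z' v.
  by move=> z z' _ _ hzz; rewrite -(subrK z' z) -ZZ' hv //; apply: pn_nat0 hzz.
have := rep_big hrp hQ per; rewrite hsum big_allpairs_dep /= => e.
have e2 : \sum_(a <- P) \sum_(b <- ro) Z (a + b) v = (size ro)%:R *: \sum_(a <- P) Z a v.
  rewrite scaler_sumr; apply: eq_bigr => a _; rewrite -sum_const_seq.
  apply: eq_big_seq => b hb; rewrite -ZZ hv //; exact: rep_mem hro hb.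
apply: (scale_cancel (natr_size_neq0 hro (pn0 0))).
by rewrite -e2 -e.
Qed.


Lemma Eu_lin R : LIN (fun u => Eu u R).
Proof.
move=> a u1 u2; rewrite /Eu scaler_sumr -big_split; apply: eq_bigr => y _.
by rewrite (Zlin y) scalerDr !scalerA mulrC.
Qed.

Lemma EuZ x u R : Eu (Z x u) R = Z x (Eu u R).
Proof.
rewrite /Eu Zsum; apply: eq_bigr => y _.
by rewrite (linZ (Zlin x)) !ZZ addrC.
Qed.

Lemma exists_M x : exists M : nat, pn (- M%:Z) x.
Proof.
have [->|x0'] := eqVneq x 0; first by exists 0%N; apply: pn0.
by exists `|val x|%N; rewrite pn_val //; lia.
Qed.

Lemma int_h5 (M n : nat) : - M%:Z + (M + n)%N%:Z = n%:Z.
Proof. lia. Qed.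

Lemma jac w : Sp w -> (forall x, pn 0 x -> Z x w = w) ->
  exists M : nat, (0 < M)%N /\ forall RM, rep (pn (- M%:Z)) 0 RM ->
     \sum_(y <- RM) psi (- y) *: Z y w = 0.
Proof.
move=> [sl ew] hw.
have [n [n0 hn]] : exists n : nat, (0 < n)%N /\ forall t, t \in sl -> forall x, pn n%:Z x -> Z x t.2 = t.2.
  clear ew; elim: sl => [|t sl [n [n0 IH]]]; first by exists 1%N.
  have [m [hm _]] := Zsm t.2; exists (maxn n m); split.
    by apply: leq_trans n0 _; rewrite leq_maxl.
  move=> t'; rewrite inE => /orP [/eqP -> | ht'] x hx.
    by apply: hm; apply: pnW hx; rewrite lez_nat leq_maxr.
  by apply: IH => //; apply: pnW hx; rewrite lez_nat leq_maxl.
have [M [M0 hM]] : exists M : nat, (0 < M)%N /\ forall t, t \in sl -> pn (- M%:Z) t.1.2.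
  clear ew; elim: sl {hn} => [|t sl [M [M0 IH]]]; first by exists 1%N.
  have [m hm] := exists_M t.1.2; exists (maxn M m); split.
    by apply: leq_trans M0 _; rewrite leq_maxl.
  move=> t'; rewrite inE => /orP [/eqP -> | ht'].
    by apply: pnW hm; rewrite lerN2 lez_nat leq_maxr.
  by apply: pnW (IH _ ht'); rewrite lerN2 lez_nat leq_maxl.
set N := maxn M n.
have hnN : forall t, t \in sl -> forall x, pn N%:Z x -> Z x t.2 = t.2.
  by move=> t ht x hx; apply: hn => //; apply: pnW hx; rewrite lez_nat leq_maxr.
have hMN : forall t, t \in sl -> pn (- N%:Z) t.1.2.
  by move=> t ht; apply: pnW (hM t ht); rewrite lerN2 lez_nat leq_maxl.
have N0 : (0 < N)%N by apply: leq_trans M0 _; rewrite leq_maxl.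
clear hn hM n0.
exists N; split=> // RM hRM.
have [R' hR'] := reps_ex (- N%:Z) (N + N); rewrite int_h5 in hR'.
have Ew0 : Eu w R' = 0.
  rewrite ew (lin_sum _ _ _ (Eu_lin R')) big1_seq // => t /andP [_ ht].
  rewrite (linZ (Eu_lin R')) (linB (Eu_lin R')) (linZ (Eu_lin R')) EuZ.
  by rewrite (E2 N0 (hnN t ht) hR' (hMN t ht)) subrr scaler0.
have [R0 hR0] := reps_ex 0 N; rewrite add0r in hR0.
have hS := rep_sumset (int_h4 N) (int_h4' N) hRM hR0.
have hwn : forall x, pn N%:Z x -> Z x w = w by move=> x hx; apply: hw; apply: pn_nat0 hx.
have := rep_big hR' hS (Eu_per N0 hwn); rewrite -/(Eu w R') Ew0 big_allpairs_dep /= => e.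
apply: (scale_cancel (natr_size_neq0 hR0 (pn0 0))).
rewrite [RHS]e scaler_sumr; apply: eq_big_seq => a ha; rewrite -sum_const_seq.
apply: eq_big_seq => b hb; have hb0 : pn 0 b by apply: rep_mem hR0 hb.
by rewrite opprD hadd (htriv (x := - b)) ?pnN // mulr1 -ZZ (hw b hb0).
Qed.


Lemma int_h6 (M : nat) : (0 < M)%N -> - M%:Z + (M.-1)%:Z = -1.
Proof. move=> h; lia. Qed.
Lemma int_h7 : -1 + (1%N)%:Z = 0 :> int.
Proof. lia. Qed.
Lemma int_h9 (a : int) : 0 <= a -> a != 0 -> 1 <= a.
Proof. move=> h1 /eqP h2; lia. Qed.
Lemma int_h8 (a b : int) : -1 <= a -> b < 0 -> 0 <= a + - b.
Proof. move=> h1 h2; lia. Qed.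

Lemma uniq0 w : (forall x, pn 0 x -> Z x w = w) -> (forall c, unit_o val c -> D c w = w) ->
  (forall P, rep (pn (-1)) 0 P -> \sum_(a <- P) Z a w = 0) ->
  (exists M : nat, (0 < M)%N /\ forall RM, rep (pn (- M%:Z)) 0 RM ->
     \sum_(y <- RM) psi (- y) *: Z y w = 0) -> w = 0.
Proof.
move=> hZ hD hS [M [M0 hM]].
have [RM hRM] := reps_ex (- M%:Z) M; rewrite addNr in hRM.
have [R0 hR0] := reps_ex 0 M; rewrite add0r in hR0.
pose e b := \sum_(y <- RM) psi (- (b * y)) *: Z y w.
have A : forall b, pn 0 b -> e b = 0.
  move=> b hb; have [ub|nub] := boolP (unit_o val b).
    have [b0 vb] := unitP ub.
    have hsc := rep_scale b0 hRM; rewrite vb !add0r in hsc.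
    have := hM _ hsc; rewrite big_map => h.
    have -> : e b = D b (\sum_(y <- RM) psi (- (b * y)) *: Z (b * y) w).
      rewrite (lin_sum _ _ _ (Dlin b0)); apply: eq_bigr => y _.
      by rewrite (linZ (Dlin b0)) -ZD // hD.
    by rewrite h (lin0 (Dlin b0)).
  have hb1 : pn 1 b.
    move: nub; rewrite /unit_o; have [->|b0] := eqVneq b 0; first by rewrite pn0.
    move: hb; rewrite !pn_val //= => h1 h2; exact: int_h9.
  have [RM1 hRM1] := reps_ex (- M%:Z) M.-1; rewrite int_h6 // in hRM1.
  have [P hP] := reps_ex (-1) 1; rewrite int_h7 in hP.
  have hSS := rep_sumset (a := - M%:Z) (b := -1) (c := 0) (int_h1 M0) ltac:(by []) hRM1 hP.
  have per : forall z z', pn (- M%:Z) z -> pn (- M%:Z) z' -> pn 0 (z - z') ->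
     psi (- (b * z)) *: Z z w = psi (- (b * z')) *: Z z' w.
    move=> z z' _ _ hzz.
    have -> : - (b * z) = - (b * z') + - (b * (z - z')) by ring.
    rewrite hadd (htriv (x := - (b * (z - z')))); last first.
      by rewrite pnN; have := pnM hb hzz; rewrite addr0.
    by rewrite mulr1 -(subrK z' z) -ZZ' hZ.
  rewrite /e (rep_big hRM hSS per) big_allpairs_dep /= big1_seq // => a /andP [_ ha].
  rewrite (eq_big_seq (fun c => psi (- (b * a)) *: Z a (Z c w))); last first.
    move=> c hc; rewrite ZZ mulrDr opprD hadd (htriv (x := - (b * c))) ?mulr1 //.
    by rewrite pnN; have := pnM hb1 (rep_mem hP hc); rewrite addrN.
  by rewrite -scaler_sumr -Zsum hS // (lin0 (Zlin a)) scaler0.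
have B : \sum_(b <- R0) e b = (size R0)%:R *: w.
  rewrite /e exchange_big /=.
  under eq_bigr => y _ do rewrite -scaler_suml.
  rewrite (bigID (fun y => pn 0 (y - 0))) /=.
  have [y1 e1] := rep_filter1 hRM (x0 := 0) (pn0 _).
  rewrite -big_filter e1 big_cons big_nil.
  have : y1 \in [seq a <- RM | pn 0 (a - 0)] by rewrite e1 inE.
  rewrite mem_filter subr0 => /andP [hy1 y1RM].
  rewrite hZ // [X in _ + X]big_seq_cond [X in _ + X]big1 ?addr0; last first.
    move=> y /andP [yRM hny]; move: hny; rewrite /= ?subr0 => hny.
    have y0 : y != 0 by apply/negP => /eqP e0; move: hny; rewrite e0 pn0.
    have vy : val y < 0 by move: hny; rewrite pn_val // -ltNge.
    have [x0p x0n] := hx0.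
    rewrite (@char_sum 0 M%:Z R0 (fun b => psi (- (b * y))) (int_h4' M) hR0 _ _ (- (x0 / y))) ?scale0r //.
    + by move=> a b; rewrite mulrDl opprD hadd.
    + move=> a ha; apply: htriv; rewrite pnN.
      by have := pnM ha (rep_mem hRM yRM); rewrite addrN.
    + rewrite pnN pn_val ?mulf_neq0 ?invr_eq0 ?x0_neq0 // hmul ?invr_eq0 ?x0_neq0 // valV //.
      by apply: int_h8 => //; rewrite -pn_val // x0_neq0.
    + by rewrite mulNr opprK divfK.
  congr (_ *: _); rewrite -sum_ones; apply: eq_big_seq => b hb.
  apply: htriv; rewrite pnN; have := pnM (rep_mem hR0 hb) hy1; rewrite addr0.
  by apply: pnW; apply: int_h4'.
apply: (scale_cancel (natr_size_neq0 hR0 (pn0 0))).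
by rewrite -B big1_seq // => b /andP [_ hb]; apply: A; apply: rep_mem hR0 hb.
Qed.


Definition IntP (v : V) := exists N : nat,
  (forall x y, pn (-1) x -> pn N%:Z y -> Z (x + y) v = Z x v) /\
  exists ro rp, [/\ rep (pn 0) N%:Z ro, rep (pn (-1)) N%:Z rp
     & 0 = (size ro)%:R^-1 *: \sum_(a <- rp) Z a v].

Lemma IntP_S v : (forall x, pn 0 x -> Z x v = v) -> IntP v ->
  forall P, rep (pn (-1)) 0 P -> \sum_(a <- P) Z a v = 0.
Proof.
move=> hv [N [_ [ro [rp [hro hrp e]]]]]; apply: int_to_S => //.
exists N, ro, rp; split=> //.
apply: (scale_cancel (a := (size ro)%:R^-1)); last by rewrite -e.
by rewrite invr_eq0; apply: (natr_size_neq0 hro); apply: pn0.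
Qed.

Lemma main_abstract u : exists! v, [/\ Sp (v - u), (forall x, pn 0 x -> Z x v = v),
   IntP v & (forall c, unit_o val c -> D c v = v)].
Proof.
have [n [hZn hDn]] := Zsm u.
have hZu : forall x, pn n.+1%:Z x -> Z x u = u.
  by move=> x hx; apply: hZn; apply: pnW hx; rewrite lez_nat.
have hDu : forall c, c != 0 -> pn n.+1%:Z (c - 1) -> D c u = u.
  by move=> c c0 hc; apply: hDn => //; apply: pnW hc; rewrite lez_nat.
have [R hR] := reps_ex (- n.+1%:Z) (n.+1 + n.+1); rewrite int_h5 in hR.
have [v [hv1 hv2 hv3 hv4]] := exist_main (ltn0Sn n) hZu hDu hR.
have [rp hrp] := reps_ex (-1) 1; rewrite int_h7 in hrp.
exists v; split.
  split=> //; exists 0%N; split.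
    by move=> x y _ hy; rewrite -ZZ hv2.
  exists [:: 0], rp; split => //; first exact: (rep_base 0).
  by rewrite hv3 // scaler0.
move=> v' [hv1' hv2' hv3' hv4'].
apply/eqP; rewrite eq_sym -subr_eq0; apply/eqP.
apply: uniq0.
- by move=> x hx; rewrite (linB (Zlin x)) hv2 // hv2'.
- by move=> c hc; have [c0 _] := unitP hc; rewrite (linB (Dlin c0)) hv4 // hv4'.
- move=> P hP; under eq_bigr => a _ do rewrite (linB (Zlin a)).
  by rewrite sumrB (IntP_S hv2' hv3' hP) hv3 // subrr.
- apply: jac; last by move=> x hx; rewrite (linB (Zlin x)) hv2 // hv2'.
  have -> : v' - v = (v' - u) - (v - u) by rewrite opprB addrA subrK.
  exact: SpB.
Qed.

End Val.

Ltac mx4 := apply/matrixP => -[[|[|[|[|?]]]] ?] -[[|[|[|[|?]]]] ?] //;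
  rewrite !mxE; (repeat rewrite !big_ord_recl !big_ord0 !mxE) => /=.

Lemma zmxD (F : fieldType) (x y : F) : zmx x *m zmx y = zmx (x + y).
Proof. rewrite /zmx; mx4; ring. Qed.

Lemma zmx0 (F : fieldType) : zmx (0 : F) = 1%:M.
Proof. by rewrite /zmx scale0r addr0. Qed.

Lemma zmx_dmx (F : fieldType) (c y : F) : zmx y *m dmx c = dmx c *m zmx (c * y).
Proof. rewrite /zmx /dmx; mx4; ring. Qed.

Lemma dmxM (F : fieldType) (c c' : F) : dmx c *m dmx c' = dmx (c * c').
Proof. rewrite /dmx; mx4; ring. Qed.

Lemma zmx_GSp (F : fieldType) (x : F) : in_GSp4 (zmx x).
Proof. exists 1; split; first exact: oner_neq0. rewrite /zmx /Jmx; mx4; ring. Qed.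

Lemma dmx_GSp (F : fieldType) (c : F) : c != 0 -> in_GSp4 (dmx c).
Proof. move=> c0; exists c; split=> //. rewrite /dmx /Jmx; mx4; ring. Qed.



Lemma zmx_Kn (F : fieldType) (val : F -> int) (n : nat) (x : F) :
  in_pn val n%:Z x -> in_Kn val n (zmx x).
Proof.
move=> hx; split; first exact: zmx_GSp.
move=> i j; rewrite /zmx addrAC subrr add0r !mxE.
by case: (_ && _); rewrite ?mulr1 ?mulr0 // /in_pn eqxx.
Qed.

Lemma dmx_Kn (F : fieldType) (val : F -> int) (n : nat) (c : F) :
  c != 0 -> in_pn val n%:Z (c - 1) -> in_Kn val n (dmx c).
Proof.
move=> c0 hc; split; first exact: dmx_GSp.
move=> [[|[|[|[|?]]]] ?] [[|[|[|[|?]]]] ?] //; rewrite !mxE /=.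
all: rewrite ?mulr1n ?mulr0n ?subrr ?subr0 ?oppr0 //.
all: rewrite ?/in_pn ?eqxx //.
Qed.

Theorem proposition7p2p3 (R : realType) (F : fieldType) (val : F -> int)
    (hF : local_field_char0 val)
    (psi : F -> R[i]) (hpsi : add_char psi) (hcond : conductor_o val psi)
    (V : lmodType R[i]) (pi : 'M[F]_4 -> V -> V) (hpi : smooth_rep val pi) :
  forall u : V, exists! v : V,
    [/\ in_ZJ_span pi psi (v - u),
        (forall x, in_o val x -> pi (zmx x) v = v),
        is_integral_pinv val (fun x => pi (zmx x) v) 0
      & (forall c, unit_o val c -> pi (dmx c) v = v)].
Proof.
case: hF => hmul hultra [varpi hvarpi] [[s [hs1 hs2]] _ _].
case: hcond => htriv [x0 hx0].
case: hpi => hlin hpi1 hpimul hsm.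
move=> u.
have hZlin : forall x, LIN (pi (zmx x)).
  by move=> x a v w; exact: (hlin _ (zmx_GSp x) a v w).
have hDlin : forall c, c != 0 -> LIN (pi (dmx c)).
  by move=> c c0 a v w; exact: (hlin _ (dmx_GSp c0) a v w).
have hZZ : forall x y v, pi (zmx x) (pi (zmx y) v) = pi (zmx (x + y)) v.
  by move=> x y v; rewrite -hpimul ?zmxD //; apply: zmx_GSp.
have hZD : forall c y v, c != 0 ->
    pi (zmx y) (pi (dmx c) v) = pi (dmx c) (pi (zmx (c * y)) v).
  move=> c y v c0; rewrite -hpimul ?zmx_dmx ?hpimul //;
  by [apply: zmx_GSp | apply: dmx_GSp].
have hDD : forall c c' v, c != 0 -> c' != 0 ->
    pi (dmx c) (pi (dmx c') v) = pi (dmx (c * c')) v.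
  by move=> c c' v c0 c'0; rewrite -hpimul ?dmxM //; apply: dmx_GSp.
have hZsm : forall v, exists n : nat,
    (forall x, in_pn val n%:Z x -> pi (zmx x) v = v) /\
    (forall c, c != 0 -> in_pn val n%:Z (c - 1) -> pi (dmx c) v = v).
  move=> v; have [n [_ hn]] := hsm v; exists n; split.
    by move=> x hx; apply: hn; apply: zmx_Kn.
  by move=> c c0 hc; apply: hn; apply: dmx_Kn.
exact: (main_abstract (Z := fun x => pi (zmx x)) (D := fun c => pi (dmx c))
   hmul hultra hvarpi (conj hs1 hs2) hpsi htriv hx0 hZlin hDlin hZZ hZD hDD hZsm u).
Qed.
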